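(* Let $\mathcal M$ be a type $\mathrm{I}_n$ factor ($n\in\mathbb N$), i.e. $\mathcal M\cong M_n(\mathbb C)$, with the trace $\tau$ satisfying $\tau(I)=n$. If $A\in\mathcal M^+$ satisfies $\tau(A)\in\mathbb N\cup\{0\}$ and $\tau(A)\geq\tau(R_A)$, then $A$ is a sum of finitely many projections.
   Context: $R_A$ denotes the range projection of $A$. *)

(* Defs.v *)
From mathcomp Require Import all_boot all_algebra.
From mathcomp Require Export complex.
From mathcomp Require Import reals.
Set Implicit Arguments. Unset Strict Implicit. Unset Printing Implicit Defensive.
Import GRing.Theory Num.Theory.
Local Open Scope ring_scope.

Definition adjmx (C : numClosedFieldType) m n (A : 'M[C]_(m, n)) : 'M[C]_(n, m) :=
  (map_mx Num.conj A)^T.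

Definition psd_mx (C : numClosedFieldType) n (A : 'M[C]_n) : Prop :=
  adjmx A = A /\ forall v : 'cV[C]_n, 0 <= (adjmx v *m A *m v) 0 0.

Definition orth_proj_mx (C : numClosedFieldType) n (P : 'M[C]_n) : Prop :=
  P *m P = P /\ adjmx P = P.

(* P is the range projection R_A of A: a projection whose range (column space)
   equals the range of A. *)
Definition is_range_proj (C : numClosedFieldType) n (A P : 'M[C]_n) : Prop :=
  orth_proj_mx P /\ (P^T == A^T)%MS.

(* Main.v *)
Require Import Defs.
From mathcomp Require Import all_boot all_algebra.
From mathcomp Require Import complex reals.
From mathcomp Require Import spectral sesquilinear.
From mathcomp Require Import ring lra.
Set Implicit Arguments. Unset Strict Implicit. Unset Printing Implicit Defensive.
Import GRing.Theory Num.Theory.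
Local Open Scope ring_scope.

Local Notation rc x := (real_complex _ x).

Lemma conj_rc (R : realType) (x : R) : (rc x)^* = rc x.
Proof. apply: conj_Creal; apply/complex_realP; by exists x. Qed.

Lemma adjmxM (C : numClosedFieldType) m n p (A : 'M[C]_(m,n)) (B : 'M[C]_(n,p)) :
  adjmx (A *m B) = adjmx B *m adjmx A.
Proof. by rewrite /adjmx map_mxM trmx_mul. Qed.

Lemma adjmxK (C : numClosedFieldType) m n (A : 'M[C]_(m,n)) : adjmx (adjmx A) = A.
Proof. by apply/matrixP => i j; rewrite !mxE conjCK. Qed.

Definition cdot (C : numClosedFieldType) n (u v : 'rV[C]_n) : C := (u *m adjmx v) 0 0.
Definition pr (C : numClosedFieldType) n (u : 'rV[C]_n) : 'M[C]_n := adjmx u *m u.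

Lemma cdotE (C : numClosedFieldType) n (u v : 'rV[C]_n) :
  cdot u v = \sum_t u 0 t * (v 0 t)^*.
Proof. rewrite /cdot mxE; apply: eq_bigr => t _; by rewrite !mxE. Qed.

Lemma prE (C : numClosedFieldType) n (u : 'rV[C]_n) i j : pr u i j = (u 0 i)^* * u 0 j.
Proof. by rewrite /pr mxE big_ord1 !mxE. Qed.

Lemma cdotDl (C : numClosedFieldType) n (u1 u2 v : 'rV[C]_n) :
  cdot (u1 + u2) v = cdot u1 v + cdot u2 v.
Proof. rewrite !cdotE -big_split /=; apply: eq_bigr => t _; by rewrite mxE mulrDl. Qed.

Lemma cdotZl (C : numClosedFieldType) n a (u v : 'rV[C]_n) :
  cdot (a *: u) v = a * cdot u v.
Proof. rewrite !cdotE mulr_sumr; apply: eq_bigr => t _; by rewrite mxE mulrA. Qed.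

Lemma cdotC (C : numClosedFieldType) n (u v : 'rV[C]_n) : cdot u v = (cdot v u)^*.
Proof.
rewrite !cdotE rmorph_sum; apply: eq_bigr => t _; rewrite rmorphM /=. by rewrite conjCK mulrC.
Qed.

Lemma cdotDr (C : numClosedFieldType) n (u v1 v2 : 'rV[C]_n) :
  cdot u (v1 + v2) = cdot u v1 + cdot u v2.
Proof. by rewrite [LHS]cdotC cdotDl rmorphD /= -!cdotC. Qed.

Lemma cdotZr (C : numClosedFieldType) n a (u v : 'rV[C]_n) :
  cdot u (a *: v) = a^* * cdot u v.
Proof. by rewrite [LHS]cdotC cdotZl rmorphM /= -cdotC. Qed.

Lemma cdot0l (C : numClosedFieldType) n (v : 'rV[C]_n) : cdot 0 v = 0.
Proof. by rewrite cdotE big1 // => t _; rewrite mxE mul0r. Qed.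

Lemma cdot0r (C : numClosedFieldType) n (v : 'rV[C]_n) : cdot v 0 = 0.
Proof. by rewrite cdotC cdot0l conjC0. Qed.

Lemma pr0 (C : numClosedFieldType) n : pr (0 : 'rV[C]_n) = 0.
Proof. by apply/matrixP => i j; rewrite prE !mxE mulr0. Qed.

Lemma pr_orth (C : numClosedFieldType) n (v : 'rV[C]_n) :
  cdot v v = 1 -> orth_proj_mx (pr v).
Proof.
move=> h; split.
  rewrite /pr mulmxA -[adjmx v *m v *m adjmx v]mulmxA.
  have -> : v *m adjmx v = 1%:M by rewrite [LHS]mx11_scalar -/(cdot v v) h.
  by rewrite mulmx1.
by rewrite /pr adjmxM adjmxK.
Qed.

Definition wt (R : realType) n (u : 'rV[R[i]]_n) : R := complex.Re (cdot u u).

Lemma cdot_ge0 (R : realType) n (u : 'rV[R[i]]_n) : 0 <= cdot u u.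
Proof. rewrite cdotE; apply: sumr_ge0 => t _; exact: mul_conjC_ge0. Qed.

Lemma cdot_wt (R : realType) n (u : 'rV[R[i]]_n) : cdot u u = rc (wt u).
Proof. by rewrite /wt RRe_real // ger0_real // cdot_ge0. Qed.

Lemma wt_ge0 (R : realType) n (u : 'rV[R[i]]_n) : 0 <= wt u.
Proof. by rewrite -ler0c -cdot_wt cdot_ge0. Qed.

Lemma wt0 (R : realType) n : wt (0 : 'rV[R[i]]_n) = 0.
Proof. by rewrite /wt cdot0l. Qed.

Lemma wt_eq0 (R : realType) n (u : 'rV[R[i]]_n) : (wt u == 0) = (u == 0).
Proof.
apply/eqP/eqP => [h|->]; last exact: wt0.
have : cdot u u = 0 by rewrite cdot_wt h.
rewrite cdotE => /eqP; rewrite psumr_eq0 => [/allP hall|t _]; last exact: mul_conjC_ge0.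
apply/rowP => t; rewrite mxE; apply/eqP; rewrite -mul_conjC_eq0.
have := hall t (mem_index_enum t); by [].
Qed.

Lemma prZ (R : realType) n (c : R) (u : 'rV[R[i]]_n) : pr (rc c *: u) = rc (c * c) *: pr u.
Proof.
apply/matrixP => i j; rewrite /pr !mxE !big_ord1 !mxE rmorphM /= conj_rc rmorphM /=; ring.
Qed.

Lemma pr_rot (R : realType) n (c s : R) (u1 u2 : 'rV[R[i]]_n) : c^+2 + s^+2 = 1 ->
  pr (rc c *: u1 + rc s *: u2) + pr (rc s *: u1 + rc (-c) *: u2) = pr u1 + pr u2.
Proof.
move=> h.
have h' : rc c ^+2 + rc s ^+2 = 1 by rewrite -!rmorphXn -rmorphD h rmorph1.
apply/matrixP => i j; rewrite /pr !mxE !big_ord1 !mxE !rmorphD !rmorphM /= !conj_rc !rmorphN /=.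
transitivity ((rc c ^+2 + rc s ^+2) * ((u1 0 i)^* * u1 0 j + (u2 0 i)^* * u2 0 j)).
  ring.
by rewrite h' mul1r.
Qed.

Lemma wtZ (R : realType) n (c : R) (u : 'rV[R[i]]_n) : wt (rc c *: u) = c^+2 * wt u.
Proof.
apply: (@complexI R); rewrite -cdot_wt cdotZl cdotZr conj_rc cdot_wt.
by rewrite rmorphM rmorphXn /= mulrA expr2.
Qed.

Lemma wt_comb (R : realType) n (c d : R) (u1 u2 : 'rV[R[i]]_n) : cdot u1 u2 = 0 ->
  wt (rc c *: u1 + rc d *: u2) = c^+2 * wt u1 + d^+2 * wt u2.
Proof.
move=> h; apply: (@complexI R); rewrite -cdot_wt.
rewrite !cdotDl !cdotDr !cdotZl !cdotZr !conj_rc h (cdotC u2 u1) h conjC0 !cdot_wt.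
rewrite !rmorphD !rmorphM ?rmorphXn /=; ring.
Qed.

Lemma cdot_comb0 (R : realType) n (c d : R) (u1 u2 v : 'rV[R[i]]_n) :
  cdot u1 v = 0 -> cdot u2 v = 0 -> cdot (rc c *: u1 + rc d *: u2) v = 0.
Proof. by move=> h1 h2; rewrite cdotDl !cdotZl h1 h2 !mulr0 addr0. Qed.

Definition upd (T : Type) n (z : 'I_n -> T) l (w : T) :=
  fun m => if m == l then w else z m.

Definition ortho (R : realType) n (z : 'I_n -> 'rV[R[i]]_n) :=
  forall p q, p != q -> cdot (z p) (z q) = 0.

Lemma ortho_upd (R : realType) n (z : 'I_n -> 'rV[R[i]]_n) l w :
  ortho z -> (forall m, m != l -> cdot w (z m) = 0) -> ortho (upd z l w).
Proof.
move=> oz hw p q pq; rewrite /upd.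
case: (eqVneq p l) => [pl|pl]; case: (eqVneq q l) => [ql|ql].
- by move: pq; rewrite pl ql eqxx.
- exact: hw.
- by rewrite cdotC hw // conjC0.
- exact: oz.
Qed.

Lemma big_two (T : Type) (idx : T) (op : Monoid.com_law idx) n (F : 'I_n -> T) i j :
  i != j -> \big[op/idx]_m F m =
    op (F i) (op (F j) (\big[op/idx]_(m | (m != i) && (m != j)) F m)).
Proof. by move=> ij; rewrite (bigD1 i) //= (bigD1 j) //= eq_sym. Qed.

Lemma big_upd (T : Type) (idx : T) (op : Monoid.com_law idx) n (U : Type)
    (F : U -> T) (z : 'I_n -> U) l w :
  \big[op/idx]_m F (upd z l w m) = op (F w) (\big[op/idx]_(m | m != l) F (z m)).
Proof.
rewrite (bigD1 l) //= /upd eqxx; congr (op _ _); apply: eq_bigr => m /negbTE -> //.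
Qed.

Definition goalP (R : realType) n (z : 'I_n -> 'rV[R[i]]_n) :=
  exists s : seq 'M[R[i]]_n,
    (forall P, P \in s -> orth_proj_mx P) /\ \sum_l pr (z l) = \sum_(P <- s) P.

Definition IHk (R : realType) n k :=
  forall z : 'I_n -> 'rV[R[i]]_n, ortho z -> \sum_l wt (z l) = k%:R ->
   (\sum_l (z l != 0%R) <= k)%N -> goalP z.

Lemma step (R : realType) n k (z z' : 'I_n -> 'rV[R[i]]_n) v :
  IHk R n k -> ortho z' -> \sum_l wt (z' l) = k%:R -> (\sum_l (z' l != 0%R) <= k)%N ->
  cdot v v = 1 -> \sum_l pr (z l) = pr v + \sum_l pr (z' l) -> goalP z.
Proof.
move=> IH oz hs hc hv he; have [s [Hs Hsum]] := IH z' oz hs hc.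
exists (pr v :: s); split; last by rewrite big_cons -Hsum.
move=> P; rewrite inE => /orP [/eqP -> | /Hs //]; exact: pr_orth.
Qed.


Lemma case1 (R : realType) n k (z : 'I_n -> 'rV[R[i]]_n) l :
  IHk R n k -> ortho z -> \sum_m wt (z m) = k.+1%:R ->
  (\sum_m (z m != 0%R) <= k.+1)%N -> wt (z l) = 1 -> goalP z.
Proof.
move=> IH oz hs hc h1.
have nz : z l != 0 by rewrite -wt_eq0 h1 oner_eq0.
apply: (step (z' := upd z l 0) (v := z l) IH).
- by apply: ortho_upd => // m _; exact: cdot0l.
- move: hs; rewrite (bigD1 l) //= big_upd /= wt0 h1 -natr1 => hs; lra.
- by move: hc; rewrite (bigD1 l) //= (big_upd _ (fun x => (x != 0%R : nat))) /= nz eqxx.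
- by rewrite cdot_wt h1 rmorph1.
- by rewrite (bigD1 l) //= big_upd /= pr0 add0r.
Qed.

Lemma case2 (R : realType) n k (z : 'I_n -> 'rV[R[i]]_n) l :
  IHk R n k -> ortho z -> \sum_m wt (z m) = k.+1%:R ->
  (\sum_m (z m != 0%R) <= k)%N -> 1 < wt (z l) -> goalP z.
Proof.
move=> IH oz hs hc h1.
set a := wt (z l) in h1.
have a0 : a != 0 by apply/eqP => h; move: h1; rewrite h; lra.
have nz : z l != 0 by rewrite -wt_eq0.
set c1 := Num.sqrt (a^-1); set c2 := Num.sqrt ((a - 1) / a).
have hc1 : c1 ^+ 2 = a^-1 by rewrite sqr_sqrtr // invr_ge0; lra.
have hc2 : c2 ^+ 2 = (a - 1) / a.
  by rewrite sqr_sqrtr // divr_ge0 //; lra.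
have hw : wt (rc c2 *: z l) = a - 1 by rewrite wtZ hc2 -/a mulrAC -mulrA divff // mulr1.
have nzw : rc c2 *: z l != 0 by rewrite -wt_eq0 hw; apply/eqP => h; move: h1; lra.
apply: (step (z' := upd z l (rc c2 *: z l)) (v := rc c1 *: z l) IH).
- apply: ortho_upd => // m ml; by rewrite cdotZl oz // 1?eq_sym // mulr0.
- move: hs; rewrite (bigD1 l) //= big_upd /= hw -/a -natr1 => hs; lra.
- by move: hc; rewrite (bigD1 l) //= (big_upd _ (fun x => (x != 0%R : nat))) /= nz nzw.
- by rewrite cdot_wt wtZ hc1 mulVf // rmorph1.
- rewrite (bigD1 l) //= big_upd /= addrA; congr (_ + _).
  rewrite !prZ -scalerDl -rmorphD -!expr2 hc1 hc2.
  have e : a^-1 + (a - 1) / a = 1 by field.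
  by rewrite e rmorph1 scale1r.
Qed.

Lemma big_upd2 (T : Type) (idx : T) (op : Monoid.com_law idx) n (U : Type)
    (F : U -> T) (z : 'I_n -> U) i j w u : i != j ->
  \big[op/idx]_m F (upd (upd z j u) i w m) =
    op (F w) (op (F u) (\big[op/idx]_(m | (m != i) && (m != j)) F (z m))).
Proof.
move=> ij; rewrite (@big_two _ _ _ _ _ _ _ ij) /upd eqxx eq_sym (negbTE ij) eqxx.
congr (op _ (op _ _)); apply: eq_bigr => m /andP [/negbTE -> /negbTE ->] //.
Qed.

Lemma case3 (R : realType) n k (z : 'I_n -> 'rV[R[i]]_n) i j :
  IHk R n k -> ortho z -> \sum_m wt (z m) = k.+1%:R ->
  (\sum_m (z m != 0%R) <= k.+1)%N -> 1 < wt (z i) -> 0 < wt (z j) -> wt (z j) < 1 ->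
  goalP z.
Proof.
move=> IH oz hs hc hi hj0 hj1.
set a := wt (z i) in hi; set b := wt (z j) in hj0 hj1.
have ij : i != j by apply/eqP => e; move: hi hj1; rewrite /a /b e; lra.
have hab : a - b != 0 by apply/eqP => e; lra.
set x := Num.sqrt ((1 - b) / (a - b)); set y := Num.sqrt ((a - 1) / (a - b)).
have hx : x ^+ 2 = (1 - b) / (a - b) by rewrite sqr_sqrtr // divr_ge0 //; lra.
have hy : y ^+ 2 = (a - 1) / (a - b) by rewrite sqr_sqrtr // divr_ge0 //; lra.
have hxy : x ^+ 2 + y ^+ 2 = 1 by rewrite hx hy; field.
have oij : cdot (z i) (z j) = 0 by exact: oz.
set v := rc x *: z i + rc y *: z j; set w := rc y *: z i + rc (- x) *: z j.
have hv : cdot v v = 1.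
  rewrite cdot_wt /v wt_comb // hx hy -/a -/b.
  have -> : (1 - b) / (a - b) * a + (a - 1) / (a - b) * b = 1 by field.
  exact: rmorph1.
have hw : wt w = a + b - 1.
  by rewrite /w wt_comb // sqrrN hx hy -/a -/b; field.
have nzw : w != 0.
  rewrite -wt_eq0 hw; apply/eqP => e; move: hi hj0 e; clear; lra.
have nzi : z i != 0.
  rewrite -wt_eq0 -/a; apply/eqP => e; move: hi e; clear; lra.
have nzj : z j != 0.
  rewrite -wt_eq0 -/b; apply/eqP => e; move: hj0 e; clear; lra.
apply: (step (z' := upd (upd z j 0) i w) (v := v) IH).
- apply: ortho_upd => [|m mi].
    by apply: ortho_upd => // m _; exact: cdot0l.
  rewrite /upd; case: (eqVneq m j) => [_|mj]; first exact: cdot0r.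
  by apply: cdot_comb0; apply: oz; rewrite eq_sym.
- rewrite (@big_upd2 _ _ _ _ _ _ _ _ _ _ _ ij) /= hw wt0.
  move: hs; rewrite (@big_two _ _ _ _ _ _ _ ij) /= -/a -/b -natr1.
  move: (\big[_/_]_(m | _) _); clear; move=> S hs; lra.
- rewrite (@big_upd2 _ _ _ _ _ (fun x => (x != 0%R : nat)) _ _ _ _ _ ij) /= nzw eqxx.
  move: hc; rewrite (@big_two _ _ _ _ _ _ _ ij) /= nzi nzj.
  by rewrite !add1n add0n ltnS.
- exact: hv.
- rewrite (@big_two _ _ _ _ _ _ _ ij) (@big_upd2 _ _ _ _ _ _ _ _ _ _ _ ij) /= pr0 add0r addrA.
  by rewrite -(pr_rot (z i) (z j) hxy) -addrA.
Qed.

Import order.Order.TTheory.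

Lemma supp_le_wt (R : realType) n (z : 'I_n -> 'rV[R[i]]_n) l :
  ~~ ((0 < wt (z l)) && (wt (z l) < 1)) -> ((z l != 0%R)%:R : R) <= wt (z l).
Proof.
move=> h; case: (eqVneq (z l) 0) => [->|nz]; first by rewrite wt0.
have hp : 0 < wt (z l) by rewrite lt_neqAle eq_sym wt_eq0 nz wt_ge0.
move: h; rewrite hp /= -leNgt; done.
Qed.

Lemma wt_le_supp (R : realType) n (z : 'I_n -> 'rV[R[i]]_n) l :
  wt (z l) <= 1 -> wt (z l) <= ((z l != 0%R)%:R : R).
Proof.
move=> h; case: (eqVneq (z l) 0) => [->|nz]; first by rewrite wt0.
done.
Qed.

Lemma main_ind (R : realType) n k : IHk R n k.
Proof.
elim: k => [|k IH] z oz hs hc.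
  exists [::]; split => //; rewrite big_nil big1 // => l _.
  move: hc; rewrite (bigD1 l) //= leqn0 addn_eq0 eqb0 negbK => /andP [/eqP -> _].
  exact: pr0.
case: (pickP (fun l => wt (z l) == 1)) => [l /eqP h1 | no1].
  exact: (case1 IH oz hs hc h1).
case: (leqP (\sum_l (z l != 0%R)) k) => hck.
  case: (pickP (fun l => 1 < wt (z l))) => [l hl | nogt].
    exact: (case2 IH oz hs hck hl).
  exfalso.
  have H1 : \sum_l wt (z l) <= ((\sum_l (z l != 0%R))%:R : R).
    rewrite natr_sum; apply: ler_sum => l _; apply: wt_le_supp.
    by rewrite leNgt nogt.
  have H2 : ((\sum_l (z l != 0%R))%:R : R) <= k%:R by rewrite ler_nat.
  move: H1 H2; rewrite hs -natr1; move: (_%:R) (_%:R); clear; move=> S K; lra.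
case: (pickP (fun l => 1 < wt (z l))) => [i hi | nogt]; last first.
  exfalso.
  case: (pickP (fun l => z l != 0)) => [l0 nz0 | none]; last first.
    by move: hck; rewrite big1 // => l _; rewrite none.
  have hlt : wt (z l0) < 1.
    rewrite lt_neqAle no1 /= leNgt; exact/negbT/nogt.
  have H1 : \sum_l wt (z l) < ((\sum_l (z l != 0%R))%:R : R).
    rewrite natr_sum (bigD1 l0) //= [X in _ < X](bigD1 l0) //= nz0.
    apply: ltr_leD => //; apply: ler_sum => l _; apply: wt_le_supp.
    by rewrite leNgt nogt.
  have H2 : ((\sum_l (z l != 0%R))%:R : R) <= k.+1%:R by rewrite ler_nat.
  move: H1 H2; rewrite hs; move: (_%:R) (_%:R); clear; move=> S K; lra.
case: (pickP (fun l => (0 < wt (z l)) && (wt (z l) < 1))) => [j /andP [hj0 hj1] | nomid].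
  exact: (case3 IH oz hs hc hi hj0 hj1).
exfalso.
have nzi : z i != 0 by rewrite -wt_eq0; apply/eqP => e; move: hi; rewrite e ltr10.
have H1 : ((\sum_l (z l != 0%R))%:R : R) < \sum_l wt (z l).
  rewrite natr_sum (bigD1 i) //= [X in _ < X](bigD1 i) //= nzi.
  apply: ltr_leD => //; apply: ler_sum => l _; apply: supp_le_wt.
  by rewrite nomid.
have H2 : (\sum_l (z l != 0%R))%N = k.+1 by apply/eqP; rewrite eqn_leq hc hck.
move: H1; rewrite H2 hs; by rewrite ltxx.
Qed.


Lemma rank_diag (F : fieldType) n (d : 'rV[F]_n) :
  \rank (diag_mx d) = (\sum_l (d 0%R l != 0%R))%N.
Proof.
elim: n d => [|n IH] d; first by rewrite [diag_mx d]flatmx0 mxrank0 big_ord0.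
have e : diag_mx d = block_mx (diag_mx (lsubmx (d : 'rV_(1 + n)))) 0 0
    (diag_mx (rsubmx (d : 'rV_(1 + n)))) by rewrite -diag_mx_row hsubmxK.
rewrite e (rank_diag_block_mx (diag_mx (lsubmx (d : 'rV_(1 + n)))) (diag_mx (rsubmx (d : 'rV_(1 + n))))) IH rank_rV big_ord_recl /=.
congr (_ + _)%N.
  congr (nat_of_bool _); apply/idP/idP.
    apply: contra => /eqP h; apply/eqP/matrixP => a b.
    rewrite !ord1 !mxE /= mulr1n; move: h; congr (d _ _ = 0); exact: val_inj.
  apply: contra => /eqP h; apply/eqP; move/matrixP: h => /(_ 0 0).
  rewrite !mxE /= mulr1n; congr (d _ _ = 0); exact: val_inj.
apply: eq_bigr => i _; rewrite !mxE; congr (d _ _ != _); exact: val_inj.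
Qed.


Lemma spec_facts (R : realType) n (B : 'M[R[i]]_n) : adjmx B = B ->
  B = adjmx (spectralmx B) *m diag_mx (spectral_diag B) *m spectralmx B /\
  spectralmx B *m adjmx (spectralmx B) = 1%:M.
Proof.
move=> hB.
have hU := spectral_unitarymx B.
have e : map_mx Num.conj (spectralmx B)^T = adjmx (spectralmx B).
  by apply/matrixP => i j; rewrite !mxE.
have herm : B \is hermsymmx.
  apply/is_hermitianmxP; rewrite expr0 scale1r; rewrite -[LHS]hB.
  by apply/matrixP => i j; rewrite !mxE.
have /orthomx_spectralP hB' := hermitian_normalmx herm.
split; last by rewrite -e; apply/unitarymxP.
by rewrite {1}hB' invmx_unitary // e.
Qed.

Lemma conj_diag (R : realType) n (B U : 'M[R[i]]_n) D :
  B = adjmx U *m D *m U -> U *m adjmx U = 1%:M -> U *m B *m adjmx U = D.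
Proof.
move=> hB hU; rewrite hB !mulmxA hU mul1mx -mulmxA hU mulmx1 //.
Qed.

Lemma rank_trace (R : realType) n (B U : 'M[R[i]]_n) (X : 'rV_n) :
  B = adjmx U *m diag_mx X *m U -> U *m adjmx U = 1%:M ->
  \rank B = (\sum_l (X 0%R l != 0%R))%N /\ \tr B = \sum_l X 0 l.
Proof.
move=> hB hU.
have [uU uaU] := mulmx1_unit hU.
split.
  rewrite hB mxrankMfree ?row_free_unit //.
  rewrite (eqmxMfull _ _) ?row_full_unit // rank_diag //.
rewrite hB mxtrace_mulC mulmxA hU mul1mx mxtrace_diag //.
Qed.

Lemma proj_trace (R : realType) n (P : 'M[R[i]]_n) :
  orth_proj_mx P -> \tr P = (\rank P)%:R.
Proof.
move=> [hPP hP].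
have [hB hU] := spec_facts hP.
set U := spectralmx P in hB hU; set Y := spectral_diag P in hB hU.
have [-> ->] := rank_trace hB hU.
have hD := conj_diag hB hU.
have hY : forall l, Y 0 l * Y 0 l = Y 0 l.
  move=> l.
  have : diag_mx Y *m diag_mx Y = diag_mx Y.
    have hUU : adjmx U *m U = 1%:M by apply: mulmx1C.
    rewrite -hD !mulmxA -[U *m P *m adjmx U *m U]mulmxA hUU mulmx1.
    by rewrite -[U *m P *m P]mulmxA hPP.
  rewrite mulmx_diag => /matrixP /(_ l l); rewrite !mxE eqxx !mulr1n //.
rewrite natr_sum; apply: eq_bigr => l _.
have := hY l; case: (eqVneq (Y 0 l) 0) => [-> //|nz] h.
have : Y 0 l * (Y 0 l - 1) = 0 by rewrite mulrBr mulr1 h subrr.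
by move/eqP; rewrite mulf_eq0 (negbTE nz) subr_eq0 => /eqP ->.
Qed.


Theorem theorem5p1 (R : realType) (n : nat) (A : 'M[R[i]]_n) :
  psd_mx A ->
  (exists k : nat, \tr A = k%:R) ->
  (exists P : 'M[R[i]]_n, is_range_proj A P /\ \tr P <= \tr A) ->
  exists s : seq 'M[R[i]]_n,
    (forall P, P \in s -> orth_proj_mx P) /\ A = \sum_(P <- s) P.
Proof.
move=> [hA hpos] [k hk] [P [[hP hPA] hPle]].
have [hB hU] := spec_facts hA.
set U := spectralmx A in hB hU; set X := spectral_diag A in hB hU.
have [hrk htr] := rank_trace hB hU.
have hD := conj_diag hB hU.
have hX0 : forall l, 0 <= X 0 l.
  move=> l; have := hpos (adjmx (row l U)); rewrite adjmxK.
  suff -> : (row l U *m A *m adjmx (row l U)) 0 0 = X 0 l by [].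
  have -> : X 0 l = diag_mx X l l by rewrite mxE eqxx mulr1n.
  rewrite -hD !mxE; apply: eq_bigr => t _; rewrite !mxE; congr (_ * _).
  by apply: eq_bigr => s _; rewrite !mxE.
pose r := fun l => complex.Re (X 0 l).
have hr : forall l, X 0 l = rc (r l).
  by move=> l; rewrite /r RRe_real // ger0_real.
have hr0 : forall l, 0 <= r l by move=> l; rewrite -ler0c -hr.
pose z := fun l => rc (Num.sqrt (r l)) *: row l U.
have hrow : forall p q, cdot (row p U) (row q U) = (p == q)%:R.
  move=> p q; rewrite cdotE.
  transitivity ((U *m adjmx U) p q).
    by rewrite mxE; apply: eq_bigr => t _; rewrite !mxE.
  by rewrite hU mxE.
have oz : ortho z.
  by move=> p q pq; rewrite /z cdotZl cdotZr hrow (negbTE pq) !mulr0.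
have hwt : forall l, wt (z l) = r l.
  move=> l; rewrite /z wtZ sqr_sqrtr // /wt hrow eqxx.
  have -> : complex.Re ((true%:R) : R[i]) = 1 by [].
  by rewrite mulr1.
have hsum : \sum_l wt (z l) = k%:R.
  apply: (@complexI R); rewrite rmorph_sum /= rmorph_nat -hk htr.
  by apply: eq_bigr => l _; rewrite hwt -hr.
have hsupp : (\sum_l (z l != 0%R) <= k)%N.
  have -> : (\sum_l (z l != 0%R) = \sum_l (X 0%R l != 0%R))%N.
    by apply: eq_bigr => l _; rewrite -wt_eq0 hwt hr fmorph_eq0.
  rewrite -hrk.
  have eP : \rank P = \rank A.
    by rewrite -(mxrank_tr P) -(mxrank_tr A) (eqmxP hPA).
  rewrite -eP -(ler_nat R[i]) -proj_trace // -hk //.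
have [s [Hs Hsum]] := main_ind oz hsum hsupp.
exists s; split => //; rewrite -Hsum.
rewrite {1}hB mul_mx_diag; apply/matrixP => a b; rewrite summxE mxE.
apply: eq_bigr => l _; rewrite /pr /z !mxE big_ord1 !mxE rmorphM /= conj_rc hr.
have e : rc (Num.sqrt (r l)) * rc (Num.sqrt (r l)) = rc (r l).
  by rewrite -rmorphM -expr2 sqr_sqrtr.
rewrite -e; ring.
Qed.
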